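(* There exists a constant $c>0$ such that for every $n$ that is a perfect square there is a set $P$ of $n$ points in the plane such that every Hamiltonian path $\Pi$ of $P$ satisfies $W(\Pi)\ge c\sqrt{n}\cdot W(K_P)$, where $K_P$ is the complete Euclidean graph on $P$. That is, the Wiener index of any Hamiltonian path of $P$ is at least $\Theta(\sqrt{n})$ times the Wiener index of the complete Euclidean graph over $P$.
   Context: For a connected graph $G$ on vertex set $P$ whose edges $(p,q)$ have weight equal to the Euclidean distance $|pq|$, $\delta_G(p,q)$ denotes the weight of a shortest path between $p$ and $q$ in $G$, and the Wiener index is $W(G)=\sum_{\{p,q\}\subseteq P}\delta_G(p,q)$. The complete Euclidean graph $K_P$ has all edges between points of $P$, so $W(K_P)=\sum_{\{p,q\}\subseteq P}|pq|$. A Hamiltonian path of $P$ is a path with straight-line edges visiting every point of $P$ exactly once. *)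

(* Defs.v *)
From Stdlib Require Import Reals.
From mathcomp Require Import all_boot all_order all_algebra all_fingroup.
From mathcomp Require Import Rstruct.
Set Implicit Arguments. Unset Strict Implicit. Unset Printing Implicit Defensive.
Import Order.TTheory GRing.Theory Num.Theory.
Local Open Scope ring_scope.

Definition point := (R * R)%type.

Definition dist (p q : point) : R :=
  Num.sqrt ((p.1 - q.1) ^+ 2 + (p.2 - q.2) ^+ 2).

Definition W_complete (n : nat) (pts : 'I_n -> point) : R :=
  \sum_(i < n) \sum_(j < n | (nat_of_ord i < nat_of_ord j)%N) dist (pts i) (pts j).

Definition ham_seq (n : nat) (pts : 'I_n -> point) (s : 'S_n) : seq point :=
  [seq pts (s i) | i <- enum 'I_n].

(* Weight of the subpath of Pi between positions i and j (i <= j):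
   this is the shortest-path distance delta_Pi between those two vertices,
   since in a path graph the unique path between two vertices is the subpath. *)
Definition path_dist (n : nat) (pts : 'I_n -> point) (s : 'S_n) (i j : nat) : R :=
  let ps := ham_seq pts s in
  \sum_(i <= k < j) dist (nth (0, 0) ps k) (nth (0, 0) ps k.+1).

Definition W_ham (n : nat) (pts : 'I_n -> point) (s : 'S_n) : R :=
  \sum_(i < n) \sum_(j < n | (nat_of_ord i < nat_of_ord j)%N) path_dist pts s i j.

(* Main.v *)
Require Import Defs.
From Stdlib Require Import Reals.
From mathcomp Require Import all_boot all_order all_algebra all_fingroup.
From mathcomp Require Import Rstruct ring lra.
Import Order.TTheory GRing.Theory Num.Theory.
Local Open Scope ring_scope.

Lemma dsum_rec (F : nat -> nat -> R) n :
  \sum_(i < n.+1) \sum_(j < n.+1 | (nat_of_ord i < nat_of_ord j)%N) F i j =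
  \sum_(i < n) \sum_(j < n | (nat_of_ord i < nat_of_ord j)%N) F i j
  + \sum_(i < n) F i n.
Proof.
rewrite big_ord_recr /=.
rewrite [X in _ + X = _]big_pred0; last first.
  by move=> j /=; rewrite ltnNge -ltnS ltn_ord.
rewrite addr0 -big_split /=; apply: eq_bigr => i _.
rewrite big_mkcond big_ord_recr /= ltn_ord -big_mkcond /=.
by [].
Qed.

Lemma sumB n : 2 * \sum_(i < n) \sum_(j < n | (nat_of_ord i < nat_of_ord j)%N) (1%R : R)
  = n%:R * (n%:R - 1).
Proof.
elim: n => [|n IH]; first by rewrite big_ord0 mulr0 mul0r.
rewrite (dsum_rec (fun _ _ => 1)) mulrDr IH sumr_const card_ord -mulr_natr.
rewrite -[n.+1%:R]natr1; ring.
Qed.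

Lemma sumI n : 2 * \sum_(i < n) (i%:R : R) = n%:R * (n%:R - 1).
Proof.
elim: n => [|n IH]; first by rewrite big_ord0 mulr0 mul0r.
rewrite big_ord_recr /= mulrDr IH -[n.+1%:R]natr1; ring.
Qed.

Lemma sumA n : 6 * \sum_(i < n) \sum_(j < n | (nat_of_ord i < nat_of_ord j)%N)
     ((j%:R - i%:R) : R)
  = (n%:R + 1) * n%:R * (n%:R - 1).
Proof.
elim: n => [|n IH]; first by rewrite big_ord0; ring.
rewrite (dsum_rec (fun i j => j%:R - i%:R)) mulrDr IH sumrB sumr_const card_ord -[(n%:R : R) *+ n]mulr_natr -[n.+1%:R]natr1.
have H := sumI n.
have -> : \sum_(i < n) (i%:R : R) = n%:R * (n%:R - 1) / 2.
  by rewrite -H; field.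
by field.
Qed.

Lemma sq_ge1 (a b : nat) : a <> b -> 1 <= ((a%:R : R) - b%:R) ^+ 2.
Proof.
move=> ab.
have [lab|lba] := ltnP a b.
  have H : (1%R : R) <= b%:R - a%:R.
    rewrite -(natrB _ (ltnW lab)) ler1n subn_gt0. exact: lab.
  rewrite -sqrrN opprB. exact: exprn_ege1.
have H : (1%R : R) <= a%:R - b%:R.
  rewrite -(natrB _ lba) ler1n subn_gt0 ltn_neqAle lba andbT.
  by apply/eqP => E; apply: ab.
exact: exprn_ege1.
Qed.

Definition gridpt (m : nat) (k : nat) : point := (((k %% m)%:R : R), ((k %/ m)%:R : R)).

Lemma grid_ge1 m a b : a <> b -> 1 <= Defs.dist (gridpt m a) (gridpt m b).
Proof.
move=> ab; rewrite /Defs.dist /gridpt /=.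
rewrite -[X in X <= _]sqrtr1.
apply: ler_wsqrtr.
have [E|E] := eqVneq (a %% m)%N (b %% m)%N.
  have E2 : (a %/ m)%N <> (b %/ m)%N.
    by move=> E2; apply: ab; rewrite (divn_eq a m) (divn_eq b m) E E2.
  apply: (le_trans (@sq_ge1 _ _ E2)); rewrite lerDr; exact: sqr_ge0.
apply: (le_trans (@sq_ge1 _ _ (elimN eqP E))); rewrite lerDl; exact: sqr_ge0.
Qed.

Lemma sq_le {x y M : R} : 0 <= x -> x <= M -> 0 <= y -> y <= M ->
  (x - y) ^+ 2 <= M ^+ 2.
Proof. move=> *; nra. Qed.

Lemma grid_le m a b : (a < m * m)%N -> (b < m * m)%N ->
  Defs.dist (gridpt m a) (gridpt m b) <= 2 * m%:R.
Proof.
move=> ha hb.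
have m0 : (0 < m)%N by move: ha; rewrite lt0n; apply: contraTneq => ->.
rewrite /Defs.dist /gridpt /=.
have bd : forall k, (k < m * m)%N -> 0 <= ((k %% m)%:R : R) <= m%:R /\
   0 <= ((k %/ m)%:R : R) <= m%:R.
  move=> k hk; rewrite !ler0n !ler_nat /=; split.
    by apply: ltnW; rewrite ltn_pmod.
  by apply: ltnW; rewrite ltn_divLR.
have [/andP[a1 a2] /andP[a3 a4]] := bd a ha.
have [/andP[b1 b2] /andP[b3 b4]] := bd b hb.
have m0' : (0%R : R) <= m%:R by exact: ler0n.
rewrite -(ger0_norm (_ : 0 <= 2 * m%:R)); last by lra.
rewrite -sqrtr_sqr; apply: ler_wsqrtr.
have h1 := sq_le a1 a2 b1 b2; have h2 := sq_le a3 a4 b3 b4.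
rewrite exprMn.
apply: (le_trans (lerD h1 h2)).
have w0 := sqr_ge0 (m%:R : R).
rewrite (_ : 2 ^+ 2 * _ = m%:R ^+ 2 + m%:R ^+ 2 + (m%:R ^+ 2 + m%:R ^+ 2)); last by ring.
by rewrite lerDl addr_ge0.
Qed.

Lemma nth_ham {n} (pts : 'I_n -> point) (s : 'S_n) {k} (hk : (k < n)%N) :
  nth (0, 0) (ham_seq pts s) k = pts (s (Ordinal hk)).
Proof.
rewrite /ham_seq (nth_map (Ordinal hk)); last by rewrite size_enum_ord.
by rewrite (nth_ord_enum (Ordinal hk) (Ordinal hk)).
Qed.

Lemma path_ge m (s : 'S_(m ^ 2)) (i j : nat) : (i <= j)%N -> (j < m ^ 2)%N ->
  j%:R - i%:R <= path_dist (fun k : 'I_(m ^ 2) => gridpt m k) s i j.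
Proof.
move=> ij jn.
rewrite /path_dist -natrB // -[X in X <= _]mulr1n -sumr_const_nat.
rewrite big_nat_cond [X in _ <= X]big_nat_cond.
apply: ler_sum => k /andP[/andP[ik kj] _].
have hk : (k < m ^ 2)%N by apply: ltn_trans kj jn.
have hk1 : (k.+1 < m ^ 2)%N by apply: leq_ltn_trans kj jn.
rewrite (nth_ham _ _ hk) (nth_ham _ _ hk1).
apply: grid_ge1 => /val_inj /perm_inj /(congr1 val) /= E.
by move: (n_Sn k); rewrite {1}E.
Qed.

Theorem theorem6 :
  exists c : R, 0 < c /\
    forall n : nat, (exists m : nat, n = (m ^ 2)%N) ->
      exists pts : 'I_n -> point,
        injective pts /\
        forall s : 'S_n,
          c * Num.sqrt (n%:R) * W_complete pts <= W_ham pts s.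
Proof.
exists (1 / 6); split; first by lra.
move=> n [m ->].
exists (fun k : 'I_(m ^ 2) => gridpt m k); split.
  move=> i j [] /eqP + /eqP; rewrite !eqr_nat => /eqP h1 /eqP h2.
  by apply: val_inj; rewrite /= (divn_eq i m) (divn_eq j m) h1 h2.
move=> s.
have mm : (m ^ 2 = m * m)%N by rewrite mulnn.
set N := (m ^ 2)%N.
have hx : (N%:R : R) = m%:R ^+ 2 by rewrite natrX.
have m0 : (0%R : R) <= m%:R by exact: ler0n.
rewrite hx sqrtr_sqr (ger0_norm m0).
have HC : W_complete (fun k : 'I_N => gridpt m k) <=
   (2 * m%:R) * \sum_(i < N) \sum_(j < N | (nat_of_ord i < nat_of_ord j)%N) (1%R : R).
  rewrite mulr_sumr; apply: ler_sum => i _.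
  rewrite mulr_sumr; apply: ler_sum => j _.
  rewrite mulr1; apply: grid_le; rewrite -mm; exact: ltn_ord.
have HH : \sum_(i < N) \sum_(j < N | (nat_of_ord i < nat_of_ord j)%N)
     ((j%:R - i%:R) : R) <= W_ham (fun k : 'I_N => gridpt m k) s.
  apply: ler_sum => i _; apply: ler_sum => j ij.
  apply: path_ge; [exact: ltnW | exact: ltn_ord].
have c0 : (0%R : R) <= 1 / 6 * m%:R by apply: mulr_ge0 => //; lra.
apply: (le_trans (ler_wpM2l c0 HC)); apply: (le_trans _ HH).
have hB := sumB N; have hA := sumA N.
have B0 : (0%R : R) <= \sum_(i < N) \sum_(j < N | (nat_of_ord i < nat_of_ord j)%N) (1%R : R).
  by apply: sumr_ge0 => i _; apply: sumr_ge0 => j _; exact: ler01.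
move: hB hA B0 hx.
set B := \sum_(i < N) _.
set A := \sum_(i < N) _.
set x := (N%:R : R).
set M := (m%:R : R).
move=> hB hA B0 hx.
nra.
Qed.
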